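(* Let $n\ge 3$ and let $\sigma$ be a maximal simplex of $\mathcal{VR}(\mathbb{I}_n;2)$. Then one of the following holds: (i) $\sigma = N[v]$ for some $v\in V(\mathbb{I}_n)$; (ii) $\sigma=\{v,v^{i_0},v^{j_0},v^{i_0,j_0}\}$ for some $v\in V(\mathbb{I}_n)$ and distinct $i_0,j_0\in[n]$; (iii) $\sigma = K_v^{i_0,j_0,k_0}$ for some $v\in V(\mathbb{I}_n)$ and distinct $i_0,j_0,k_0\in[n]$.
   Context: $\mathbb{I}_n$ is the $n$-dimensional hypercube graph on vertex set $\{0,1\}^n$ (adjacent iff differing in exactly one coordinate), with Hamming distance $d(v,w)=\#\{i: v(i)\ne w(i)\}$, where $v(i)$ is the $i$-th coordinate. $\mathcal{VR}(X;r)$ is the simplicial complex of finite subsets of the metric space $X$ of diameter at most $r$. $[n]=\{1,\dots,n\}$. For a vertex $v$ and distinct $i_1,\dots,i_k\in[n]$, $v^{i_1,\dots,i_k}$ is the vertex obtained from $v$ by changing coordinates $i_1,\dots,i_k$ (and only those). $N(v)=\{v^i:i\in[n]\}$ and $N[v]=N(v)\cup\{v\}$. For distinct $i,j,k\in[n]$, $K_v^{i,j,k}=\{v,v^{i,j},v^{j,k},v^{i,k}\}$. *)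

(* Defs.v *)
From mathcomp Require Import all_boot.
Set Implicit Arguments. Unset Strict Implicit. Unset Printing Implicit Defensive.

Definition vertex (n : nat) := {ffun 'I_n -> bool}.

Definition hdist n (v w : vertex n) : nat := #|[set i | v i != w i]|.

(* v^{S}: change exactly the coordinates in S. *)
Definition flip n (v : vertex n) (S : {set 'I_n}) : vertex n :=
  [ffun i => if i \in S then ~~ v i else v i].

Definition closed_nbhd n (v : vertex n) : {set vertex n} :=
  v |: [set flip v [set i] | i : 'I_n].

Definition Kv n (v : vertex n) (i j k : 'I_n) : {set vertex n} :=
  [set v; flip v [set i; j]; flip v [set j; k]; flip v [set i; k]].

Definition VR_simplex n (r : nat) (s : {set vertex n}) : Prop :=
  s != set0 /\ (forall v w, v \in s -> w \in s -> hdist v w <= r).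

Definition VR_maximal_simplex n (r : nat) (s : {set vertex n}) : Prop :=
  VR_simplex r s /\ (forall t, VR_simplex r t -> s \subset t -> t = s).

(* Main.v *)
Require Import Defs.
From mathcomp Require Import all_boot zify.
Set Implicit Arguments. Unset Strict Implicit. Unset Printing Implicit Defensive.

Ltac genall := repeat (match goal with
  | |- context [nat_of_bool ?b] => lazymatch b with true => fail | false => fail | _ => (assert_fails (is_var b); let c := fresh "b" in move: (b) => c) end
  | |- context [@card ?T ?A] => let c := fresh "c" in move: (@card T A) => c
  | |- context [hdist ?a ?b] => let c := fresh "h" in move: (hdist a b) => c
  end).
Ltac glia := repeat match goal with H : _ |- _ => clear H end; genall; intros; first [exfalso; lia | lia].

Section H.
Variable n : nat.
Implicit Types (v w a b u t : vertex n) (S T : {set 'I_n}).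

Definition Dv v u : {set 'I_n} := [set i | v i != u i].

Lemma hdistE v u : hdist v u = #|Dv v u|. Proof. by []. Qed.

Lemma Dv_flip v S : Dv v (flip v S) = S.
Proof. by apply/setP => i; rewrite !inE ffunE; case: (i \in S); case: (v i). Qed.

Lemma flip_Dv v u : flip v (Dv v u) = u.
Proof. by apply/ffunP => i; rewrite ffunE inE; case: (v i); case: (u i). Qed.

Lemma flip0 v : flip v set0 = v.
Proof. by apply/ffunP => i; rewrite ffunE inE. Qed.

Lemma Dvv v : Dv v v = set0.
Proof. by apply/setP => i; rewrite !inE eqxx. Qed.

Lemma hdist_sym a b : hdist a b = hdist b a.
Proof. by apply: eq_card => i; rewrite !inE eq_sym. Qed.

Lemma hdist_formula v a b :
  hdist a b + 2 * #|Dv v a :&: Dv v b| = hdist v a + hdist v b.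
Proof.
have E : [set i | a i != b i] = (Dv v a :|: Dv v b) :\: (Dv v a :&: Dv v b).
  by apply/setP => i; rewrite !inE; case: (v i); case: (a i); case: (b i).
have sIU : Dv v a :&: Dv v b \subset Dv v a :|: Dv v b.
  by apply: subset_trans (subsetIl _ _) (subsetUl _ _).
have -> : hdist a b = #|[set i | a i != b i]| by [].
rewrite E cardsD (setIidPr sIU) !hdistE.
have := cardsUI (Dv v a) (Dv v b).
have : #|Dv v a :&: Dv v b| <= #|Dv v a :|: Dv v b|.
  by apply: subset_leq_card.
move: #|Dv v a :&: Dv v b| #|Dv v a :|: Dv v b| #|Dv v a| #|Dv v b| => p q r s. lia.
Qed.

Lemma triangle w a b : hdist a b <= hdist w a + hdist w b.
Proof. have := hdist_formula w a b; lia. Qed.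

Lemma cardI1 T (x : 'I_n) : #|T :&: [set x]| = (x \in T).
Proof.
case hx: (x \in T).
  by rewrite (setIidPr _) ?cards1 // sub1set.
rewrite (_ : _ :&: _ = set0) ?cards0 //; apply/setP => i; rewrite !inE.
by case: eqP => [->|]; rewrite ?hx ?andbF ?andbT.
Qed.

Lemma cardI2 T (x y : 'I_n) : x != y -> #|T :&: [set x; y]| = (x \in T) + (y \in T).
Proof.
move=> xy; rewrite setIUr cardsU cardI1 cardI1.
rewrite (_ : (T :&: [set x]) :&: (T :&: [set y]) = set0) ?cards0 ?subn0 //.
apply/setP => i; rewrite !inE; case: (i =P x) => [->|]; rewrite ?andbF //=.
by rewrite (negbTE xy) !andbF.
Qed.

Lemma nb_dist w a : a \in closed_nbhd w -> hdist w a <= 1.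
Proof.
case/setU1P => [->|/imsetP [i _ ->]]; rewrite hdistE ?Dvv ?cards0 //.
by rewrite Dv_flip cards1.
Qed.

Lemma nb_simplex w : VR_simplex 2 (closed_nbhd w).
Proof.
split; first by apply/set0Pn; exists w; apply: setU11.
move=> a b /nb_dist ha /nb_dist hb; have := triangle w a b; lia.
Qed.

Lemma nb_mem w u : hdist w u <= 1 -> u \in closed_nbhd w.
Proof.
rewrite hdistE -{2}(flip_Dv w u) leq_eqVlt ltnS leqn0.
case/orP => [/cards1P [i ->]|/eqP/cards0_eq ->].
  by apply/setU1P; right; apply/imsetP; exists i.
by rewrite flip0 setU11.
Qed.

Lemma flip_out v S i : i \notin S -> flip v S i = v i.
Proof. by rewrite ffunE => /negbTE ->. Qed.

Definition sq v (x y : 'I_n) := [set v; flip v [set x]; flip v [set y]; flip v [set x; y]].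

Lemma sq_agree v x y a i : a \in sq v x y -> i \notin [set x; y] -> a i = v i.
Proof.
rewrite /sq !inE -!orbA => /or4P []  /eqP -> hi //; apply: flip_out; move: hi; rewrite !inE.
- by apply: contra => /eqP ->; rewrite eqxx.
- by apply: contra => /eqP ->; rewrite eqxx orbT.
- by [].
Qed.

Lemma sq_simplex v x y : VR_simplex 2 (sq v x y).
Proof.
split; first by apply/set0Pn; exists v; rewrite /sq !inE eqxx.
move=> a b ha hb; apply: leq_trans (_ : #|[set x; y]| <= 2); last first.
  by rewrite cards2; case: (x != y).
apply: subset_leq_card; apply/subsetP => i; rewrite inE; apply: contraR => hi.
by rewrite (sq_agree ha hi) (sq_agree hb hi).
Qed.

Lemma sq_mem v x y u : Dv v u \subset [set x; y] -> u \in sq v x y.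
Proof.
move=> sub; rewrite -(flip_Dv v u); set U := Dv v u in sub *.
have key : forall i, i \in U -> (i == x) || (i == y).
  by move=> i /(subsetP sub); rewrite !inE.
case hx: (x \in U); case hy: (y \in U).
- have -> : U = [set x; y].
    by apply/eqP; rewrite eqEsubset sub subUset !sub1set hx hy.
  by rewrite /sq !inE eqxx !orbT.
- have -> : U = [set x].
    apply/eqP; rewrite eqEsubset sub1set hx andbT; apply/subsetP => i hi.
    by case/orP: (key i hi) => /eqP ei; rewrite inE; [rewrite ei | move: hy; rewrite -ei hi].
  by rewrite /sq !inE eqxx !orbT.
- have -> : U = [set y].
    apply/eqP; rewrite eqEsubset sub1set hy andbT; apply/subsetP => i hi.
    by case/orP: (key i hi) => /eqP ei; rewrite inE; [move: hx; rewrite -ei hi | rewrite ei].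
  by rewrite /sq !inE eqxx !orbT.
- have -> : U = set0.
    apply/setP => i; rewrite in_set0; apply: negbTE; apply/negP => hi.
    by case/orP: (key i hi) => /eqP ei; [move: hx | move: hy]; rewrite -ei hi.
  by rewrite flip0 /sq !inE eqxx.
Qed.

Lemma card3 (x y z : 'I_n) : #|[set x; y; z]| <= 3.
Proof.
apply: leq_trans (leq_card_setU _ _) _; rewrite cards1.
apply: leq_trans (leq_add (leq_card_setU _ _) (leqnn _)) _; rewrite !cards1 //.
Qed.

Lemma K_prop v (x y z : 'I_n) a : [/\ x != y, y != z & x != z] -> a \in Kv v x y z ->
  Dv v a \subset [set x; y; z] /\ (#|Dv v a| = 0 \/ #|Dv v a| = 2).
Proof.
move=> [xy yz xz]; rewrite /Kv !inE -!orbA => /or4P [] /eqP ->; rewrite ?Dvv ?Dv_flip.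
- by rewrite sub0set cards0; split => //; left.
- split; last by right; rewrite cards2 xy.
  by apply/subsetP => i; rewrite !inE => /orP [] ->; rewrite ?orbT.
- split; last by right; rewrite cards2 yz.
  by apply/subsetP => i; rewrite !inE => /orP [] ->; rewrite ?orbT.
- split; last by right; rewrite cards2 xz.
  by apply/subsetP => i; rewrite !inE => /orP [] ->; rewrite ?orbT.
Qed.

Lemma K_simplex v (x y z : 'I_n) : [/\ x != y, y != z & x != z] -> VR_simplex 2 (Kv v x y z).
Proof.
move=> d; split; first by apply/set0Pn; exists v; rewrite /Kv !inE eqxx.
move=> a b /(K_prop d) [sa ca] /(K_prop d) [sb cb].
have := hdist_formula v a b; have := cardsUI (Dv v a) (Dv v b).
have : #|Dv v a :|: Dv v b| <= 3.
  apply: leq_trans (card3 x y z); apply: subset_leq_card; by rewrite subUset sa sb.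
rewrite !hdistE in ca cb *.
move: #|Dv v a :&: Dv v b| #|Dv v a :|: Dv v b| #|Dv v a| #|Dv v b| #|[set i | a i != b i]| ca cb.
move=> p q r s h ca cb; rewrite /hdist. lia.
Qed.

Lemma pairb (sigma : {set vertex n}) v s t (p q : 'I_n) :
  (forall a b, a \in sigma -> b \in sigma -> hdist a b <= 2) ->
  p != q -> s \in sigma -> t \in sigma -> Dv v s = [set p; q] ->
  #|Dv v t| <= 2 * ((p \in Dv v t) + (q \in Dv v t)).
Proof.
move=> sd pq ss ts Ds.
have := hdist_formula v s t; rewrite (hdistE v s) (hdistE v t) Ds setIC cardI2 // cards2 pq /=.
have := sd s t ss ts. move: (p \in Dv v t) (q \in Dv v t) #|Dv v t| (hdist s t) => b1 b2 c h. lia.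
Qed.

Lemma lb T (p q : 'I_n) : p != q -> (p \in T) + (q \in T) <= #|T|.
Proof. by move=> pq; rewrite -cardI2 //; apply: subset_leq_card; apply: subsetIl. Qed.

Lemma core (sigma : {set vertex n}) v w u (x y z : 'I_n) :
  (forall a b, a \in sigma -> b \in sigma -> hdist a b <= 2) ->
  (forall X : {set vertex n}, VR_simplex 2 X -> sigma \subset X -> sigma = X) ->
  v \in sigma -> w \in sigma -> u \in sigma -> x != y -> x != z -> y != z ->
  Dv v w = [set x; y] -> Dv v u = [set x; z] ->
  (exists v' : vertex n, sigma = closed_nbhd v') \/
  (exists (v' : vertex n) (i0 j0 k0 : 'I_n),
     [/\ i0 != j0, j0 != k0 & i0 != k0] /\ sigma = Kv v' i0 j0 k0).
Proof.
move=> sd close vs ws us xy xz yz Dw Du.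
have dv2 : forall t, t \in sigma -> #|Dv v t| <= 2.
  by move=> t ts; rewrite -hdistE; apply: sd.
case: (boolP [exists t in sigma, (x \notin Dv v t) && (0 < #|Dv v t|)]).
- case/exists_inP => t0 t0s /andP [hx0 hc0].
  have h1 := pairb sd xy ws t0s Dw; have h2 := pairb sd xz us t0s Du.
  rewrite (negbTE hx0) in h1 h2.
  have hy : y \in Dv v t0 by move: hc0 h1; case: (y \in Dv v t0) => //=; glia.
  have hz : z \in Dv v t0 by move: hc0 h2; case: (z \in Dv v t0) => //=; glia.
  have D0 : Dv v t0 = [set y; z].
    apply/eqP; rewrite eq_sym eqEcard subUset !sub1set hy hz cards2 yz.
    exact: dv2.
  right; exists v, x, y, z; split; first by [].
  apply: close; first exact: K_simplex.
  apply/subsetP => t ts.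
  have g1 := pairb sd xy ws ts Dw; have g2 := pairb sd xz us ts Du.
  have g3 := pairb sd yz t0s ts D0.
  have l1 := lb (Dv v t) xy; have l2 := lb (Dv v t) xz; have l3 := lb (Dv v t) yz.
  have g0 := dv2 t ts.
  rewrite -(flip_Dv v t).
  case ex: (x \in Dv v t); case ey: (y \in Dv v t); case ez: (z \in Dv v t);
    rewrite ?ex ?ey ?ez /= in g1 g2 g3 l1 l2 l3.
  + have -> : Dv v t = [set x; y].
      by apply/eqP; rewrite eq_sym eqEcard subUset !sub1set ex ey cards2 xy.
    by rewrite /Kv !inE eqxx ?orbT.
  + have -> : Dv v t = [set x; y].
      by apply/eqP; rewrite eq_sym eqEcard subUset !sub1set ex ey cards2 xy.
    by rewrite /Kv !inE eqxx ?orbT.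
  + have -> : Dv v t = [set x; z].
      by apply/eqP; rewrite eq_sym eqEcard subUset !sub1set ex ez cards2 xz.
    by rewrite /Kv !inE eqxx ?orbT.
  + move: g0 g1 g2 g3 l1 l2 l3; glia.
  + have -> : Dv v t = [set y; z].
      by apply/eqP; rewrite eq_sym eqEcard subUset !sub1set ey ez cards2 yz.
    by rewrite /Kv !inE eqxx ?orbT.
  + move: g0 g1 g2 g3 l1 l2 l3; glia.
  + move: g0 g1 g2 g3 l1 l2 l3; glia.
  + have -> : Dv v t = set0 by apply: cards0_eq; move: g0 g1 g2 g3 l1 l2 l3; glia.
    by rewrite flip0 /Kv !inE eqxx.
- move/exists_inPn => H.
  left; exists (flip v [set x]); apply: close; first exact: nb_simplex.
  apply/subsetP => t ts; apply: nb_mem.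
  have := hdist_formula v (flip v [set x]) t.
  rewrite (hdistE v (flip v [set x])) (hdistE v t) Dv_flip cards1 setIC cardI1.
  have := H t ts; have := dv2 t ts.
  case: (x \in Dv v t) => /=; first glia.
  rewrite lt0n negbK => _ /eqP ->; glia.
Qed.
End H.

Theorem mainTheorem4 (n : nat) (hn : 3 <= n) (sigma : {set vertex n}) :
  VR_maximal_simplex 2 sigma ->
  (exists v : vertex n, sigma = closed_nbhd v) \/
  (exists (v : vertex n) (i0 j0 : 'I_n), i0 != j0 /\
     sigma = [set v; flip v [set i0]; flip v [set j0]; flip v [set i0; j0]]) \/
  (exists (v : vertex n) (i0 j0 k0 : 'I_n),
     [/\ i0 != j0, j0 != k0 & i0 != k0] /\ sigma = Kv v i0 j0 k0).
Proof.
move=> [[s0 sd] smax].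
have close : forall X : {set vertex n}, VR_simplex 2 X -> sigma \subset X -> sigma = X.
  by move=> X hX hs; symmetry; apply: smax.
case/set0Pn: s0 => v vs.
case: (boolP [forall u in sigma, hdist v u <= 1]) => [/forall_inP H | /forall_inPn [w ws hw]].
  left; exists v; apply: close; first exact: nb_simplex.
  by apply/subsetP => u us; apply: nb_mem; apply: H.
have h2 : #|Dv v w| == 2.
  rewrite -hdistE; move: hw (sd v w vs ws); rewrite -ltnNge => hw hw2.
  by rewrite eqn_leq hw2 hw.
case/cards2P: h2 => x [y [xy Dw]].
case: (boolP [forall u in sigma, Dv v u \subset [set x; y]]) => [/forall_inP H | /forall_inPn [u us hu]].
  right; left; exists v, x, y; split => //.
  apply: close; first exact: sq_simplex.
  by apply/subsetP => t ts; apply: sq_mem; apply: H.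
case/subsetPn: hu => z zu; rewrite !inE negb_or => /andP [zx zy].
have g1 := pairb sd xy ws us Dw.
have du : #|Dv v u| <= 2 by rewrite -hdistE; apply: sd.
have l1 := lb (Dv v u) zx; have l2 := lb (Dv v u) zy.
rewrite zu in l1 l2.
have fin : forall P : Prop, ((exists v', sigma = closed_nbhd v') \/
  (exists (v' : vertex n) (i0 j0 k0 : 'I_n),
     [/\ i0 != j0, j0 != k0 & i0 != k0] /\ sigma = Kv v' i0 j0 k0)) ->
  (exists v', sigma = closed_nbhd v') \/ P \/
  (exists (v' : vertex n) (i0 j0 k0 : 'I_n),
     [/\ i0 != j0, j0 != k0 & i0 != k0] /\ sigma = Kv v' i0 j0 k0).
  by move=> P [H|H]; [left | right; right].
apply: fin.
case ex: (x \in Dv v u).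
  have Du : Dv v u = [set x; z].
    apply/eqP; rewrite eq_sym eqEcard subUset !sub1set ex zu cards2 eq_sym zx.
    exact: du.
  by apply: (core sd close vs ws us xy _ _ Dw Du); rewrite eq_sym.
case ey: (y \in Dv v u); last first.
  by rewrite ex ey /= in g1 l1; move: g1 l1; glia.
have Du : Dv v u = [set y; z].
  apply/eqP; rewrite eq_sym eqEcard subUset !sub1set ey zu cards2 eq_sym zy.
  exact: du.
have Dw' : Dv v w = [set y; x] by rewrite Dw setUC.
by apply: (core sd close vs ws us _ _ _ Dw' Du); rewrite // eq_sym.
Qed.
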